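(* Every $\epsilon_5$-segment bipath $P$ from $u$ to $v$ in $G$ is an $\epsilon_5$-bipath.
   Context: $G=(V,E)$ is an undirected graph with $n\ge3$ vertices and real edge weights in $[1,W]$; shortest paths in every subgraph are assumed unique, $\pi_{G'}(x,y)$ is the shortest $x$-$y$ path in $G'$, $\circ$ is path concatenation, $|P|$ weighted length, $P[a,b]$ subpath. Let $k=\ln n$, $\epsilon>0$, $\epsilon_1=\epsilon/(2+\epsilon)$, $\epsilon_5=\epsilon_1/(4k-2)$. Let $V=U_1,\dots,U_p$ be subsets of $V$; the level $l(v)$ is the largest $l$ with $v\in U_l$, and $G_i$ is the subgraph induced by vertices of level $\le i$. $\epsilon_5$-segments: for $P=(u=v_0,\dots,v_\ell=v)$ and $1\le i,j<\ell$, $v_i,v_j$ are in the same segment if either both $|P[u,v_i]|,|P[u,v_j]|\le|P|/2$ and $\lfloor\log_{1+\epsilon_5}|P[u,v_i]|\rfloor=\lfloor\log_{1+\epsilon_5}|P[u,v_j]|\rfloor$, or both $|P[v_i,v]|,|P[v_j,v]|<|P|/2$ and $\lfloor\log_{1+\epsilon_5}|P[v_i,v]|\rfloor=\lfloor\log_{1+\epsilon_5}|P[v_j,v]|\rfloor$; classes are contiguous, $u,v$ in no segment. $P$ is an $\epsilon_5$-segment bipath if every segment $P[x,y]$ equals $\pi_{G_i}(x,z)\circ\pi_{G_j}(z,y)$ for some levels $1\le i,j\le p$ and some $z\in P[x,y]$. Let $B=\lceil\log_{1+\epsilon_5}(nW)\rceil$. $P$ is an $\epsilon_5$-bipath if it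 is a concatenation $e_0,P_0,e_1,\dots,P_{2B+1},e_{2B+2}$ with each $e_i$ empty or an edge, each $P_k=P[u_k,v_k]$ either empty or of the form $\pi_{G_i}(u_k,z)\circ\pi_{G_j}(z,v_k)$ for some $z\in P_k$ and levels $1\le i,j\le p$, and $|P[u,v_k]|\le(1+\epsilon_5)^k$ if $k<B+1$, $|P[u_k,v]|\le(1+\epsilon_5)^{2B+1-k}$ if $k\ge B+1$ (for nonempty $P_k$). *)

(* Defs.v *)
From mathcomp Require Import all_boot all_order all_algebra.
From mathcomp Require Import reals exp.
Set Implicit Arguments. Unset Strict Implicit. Unset Printing Implicit Defensive.
Import Order.TTheory GRing.Theory Num.Theory.
Local Open Scope ring_scope.

Section Defs.
Variables (R : realType) (V : finType) (adj : rel V) (w : V -> V -> R).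

Definition wlen (p : seq V) : R := \sum_(e <- zip p (behead p)) w e.1 e.2.

Definition walk_in (S : {set V}) (p : seq V) (x y : V) : Prop :=
  exists s, [/\ p = x :: s, last x s = y, path adj x s & all (mem S) p].

Definition is_spath (S : {set V}) (p : seq V) (x y : V) : Prop :=
  walk_in S p x y /\ forall q, walk_in S q x y -> wlen p <= wlen q.

Definition subpath (P : seq V) (a b : nat) : seq V := take (b - a).+1 (drop a P).

Variables (U : nat -> {set V}) (p : nat).

Definition level (x : V) : nat := \max_(l < p.+1 | (1 <= l)%N && (x \in U l)) l.

Definition Gset (i : nat) : {set V} := [set x | (level x <= i)%N].

Definition two_spaths (P : seq V) (x0 : V) (a b : nat) : Prop :=
  exists m i j, [/\ (a <= m <= b)%N, (1 <= i <= p)%N, (1 <= j <= p)%N,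
    is_spath (Gset i) (subpath P a m) (nth x0 P a) (nth x0 P m)
  & is_spath (Gset j) (subpath P m b) (nth x0 P m) (nth x0 P b)].

Variables (eps5 : R) (B : nat).

Definition flog (x : R) : int := Num.floor (ln x / ln (1 + eps5)).

(* P = (v_0, ..., v_l) with l = (size P).-1; prefix/suffix lengths *)
Definition pl (P : seq V) (i : nat) : R := wlen (take i.+1 P).
Definition sl (P : seq V) (i : nat) : R := wlen (drop i P).

Definition same_seg (P : seq V) (i j : nat) : Prop :=
  let l := (size P).-1 in
  [/\ (1 <= i < l)%N, (1 <= j < l)%N &
    (pl P i <= wlen P / 2 /\ pl P j <= wlen P / 2 /\ flog (pl P i) = flog (pl P j))
    \/ (sl P i < wlen P / 2 /\ sl P j < wlen P / 2 /\ flog (sl P i) = flog (sl P j))].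

(* every eps5-segment P[v_a, v_b] (a = min, b = max index of its class) is a
   concatenation of two shortest paths in some G_i, G_j *)
Definition segment_bipath (P : seq V) (x0 : V) : Prop :=
  forall a b, same_seg P a b -> (forall c, same_seg P a c -> (a <= c <= b)%N) ->
    two_spaths P x0 a b.

(* eps5-bipath: P = e_0, P_0, e_1, ..., P_{2B+1}, e_{2B+2}; P_k = P[v_(s k), v_(t k)],
   gaps of 0 or 1 edge between consecutive pieces; pieces with no edge are the
   empty pieces. *)
Definition bipath (P : seq V) (x0 : V) : Prop :=
  let l := (size P).-1 in
  exists s t : nat -> nat,
  [/\ (s 0 <= 1)%N, (l <= (t (2 * B + 1)%N).+1)%N,
      forall k, (k <= 2 * B + 1)%N -> (s k <= t k <= l)%N,
      forall k, (k < 2 * B + 1)%N -> (t k <= s k.+1 <= (t k).+1)%N &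
      forall k, (k <= 2 * B + 1)%N -> (s k < t k)%N ->
        [/\ two_spaths P x0 (s k) (t k),
            (k < B.+1)%N -> pl P (t k) <= (1 + eps5) ^+ k
          & (B.+1 <= k)%N -> sl P (s k) <= (1 + eps5) ^+ (2 * B + 1 - k)]].

End Defs.

Definition eps1 (R : realType) (eps : R) : R := eps / (2 + eps).
Definition eps5 (R : realType) (n : nat) (eps : R) : R :=
  eps1 eps / (4 * ln (n%:R : R) - 2).
Definition Bnum (R : realType) (n : nat) (W eps : R) : nat :=
  `| Num.ceil (ln (n%:R * W) / ln (1 + eps5 n eps)) |%N.

(* Main.v *)
Require Import Defs.
From mathcomp Require Import all_boot all_order all_algebra.
From mathcomp Require Import reals exp.
Import Order.TTheory GRing.Theory Num.Theory.
Local Open Scope ring_scope.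
From mathcomp Require Import zify lra.
Set Implicit Arguments. Unset Strict Implicit.

Section Seqs.
Variables (R : realType) (V : finType) (adj : rel V) (w : V -> V -> R).
Local Notation wl := (wlen w).

Lemma wlen_nil : wl [::] = 0.
Proof. by rewrite /wlen big_nil. Qed.
Lemma wlen_1 x : wl [:: x] = 0.
Proof. by rewrite /wlen /= big_nil. Qed.
Lemma wlen_cons2 x y s : wl [:: x, y & s] = w x y + wl (y :: s).
Proof. by rewrite /wlen /= big_cons. Qed.

Lemma wlen_split s i : wl (take i.+1 s) + wl (drop i s) = wl s.
Proof.
elim: s i => [|x s IH] i; first by rewrite /= wlen_nil addr0.
case: i => [|i].
  rewrite /=; have -> : take 0%N s = [::] by case: (s).
  by rewrite wlen_1 add0r.
case: s IH => [|y s] IH.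
  by rewrite take_oversize ?drop_oversize // wlen_nil addr0.
rewrite take_cons drop_cons wlen_cons2 -(IH i) addrA; congr (_ + _).
have -> : take i.+1 (y :: s) = y :: take i s by [].
by rewrite wlen_cons2.
Qed.

Hypothesis wb : forall x y, adj x y -> 1 <= w x y.

Lemma wlen_ge s : sorted adj s -> ((size s).-1)%:R <= wl s.
Proof.
elim: s => [|x s IH]; first by rewrite wlen_nil.
case: s IH => [|y s] IH; first by rewrite wlen_1.
rewrite /= => /andP [hxy hp].
rewrite wlen_cons2 -addn1 natrD addrC lerD //; first exact: wb.
exact: IH.
Qed.

Lemma wlen_ge0 s : sorted adj s -> 0 <= wl s.
Proof. move=> h; exact: le_trans (ler0n _ _) (@wlen_ge s h). Qed.

Lemma wlen_le (W : R) s : sorted adj s -> (forall x y, adj x y -> w x y <= W) ->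
  wl s <= ((size s).-1)%:R * W.
Proof.
move=> + hW; elim: s => [|x s IH]; first by rewrite wlen_nil mul0r.
case: s IH => [|y s] IH; first by rewrite wlen_1 mul0r.
rewrite /= => /andP [hxy hp].
rewrite wlen_cons2 -addn1 natrD mulrDl mul1r [_ + W]addrC lerD //; [exact: hW | exact: IH].
Qed.

Lemma pl_mono s i j : sorted adj s -> (i <= j)%N -> wl (take i.+1 s) <= wl (take j.+1 s).
Proof.
move=> hs hij.
rewrite -(wlen_split (take j.+1 s) i) -take_min (minn_idPl _) ?ltnS // lerDl.
apply: wlen_ge0; apply: drop_sorted; exact: take_sorted.
Qed.
End Seqs.
Section Flog.
Variables (R : realType) (e N : R).
Hypothesis e0 : 0 < e.
Let B := `| Num.ceil (ln N / ln (1 + e)) |%N.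

Lemma lne_gt0 : 0 < ln (1 + e).
Proof. by apply: ln_gt0; rewrite ltrDl. Qed.

Lemma flog_ge0 x : 1 <= x -> (0 <= flog e x)%R.
Proof.
move=> hx; rewrite /flog floor_ge0 divr_ge0 //; first exact: ln_ge0.
exact: ltW lne_gt0.
Qed.

Lemma flog_mono x y : 1 <= x -> x <= y -> (flog e x <= flog e y)%R.
Proof.
move=> hx hxy; have hx0 : 0 < x by exact: lt_le_trans ltr01 hx.
have hy0 : 0 < y by exact: lt_le_trans hx0 hxy.
rewrite /flog; apply: le_floor; rewrite ler_pM2r ?invr_gt0 ?lne_gt0 //.
by rewrite ler_ln.
Qed.

Lemma flog_ub x : 1 <= x -> x < (1 + e) ^+ (`|flog e x|%N.+1).
Proof.
move=> hx; have hx0 : 0 < x by exact: lt_le_trans ltr01 hx.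
have h := floorD1_gt (ln x / ln (1 + e)).
have he : 0 < 1 + e by rewrite ltr_wpDr ?ltW.
rewrite -ltr_ln ?posrE ?exprn_gt0 // lnXn //.
rewrite -mulr_natl -ltr_pdivrMr ?lne_gt0 //; apply: lt_le_trans h _.
have hf := flog_ge0 hx; move: hf; rewrite /flog.
set f := Num.floor _ => hf.
by rewrite -[X in (X + 1)%:~R](gez0_abs hf) -PoszD addn1.
Qed.

Lemma flog_ltB x : 1 <= x -> x < N -> (`|flog e x| < B)%N.
Proof.
move=> hx hxN; have hx0 : 0 < x by exact: lt_le_trans ltr01 hx.
have hN1 : 1 < N by exact: le_lt_trans hx hxN.
rewrite /B -ltz_nat gez0_abs ?flog_ge0 // gez0_abs; last first.
  rewrite ceil_ge0; apply: lt_le_trans (ltrN10 R) _.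
  exact: divr_ge0 (ln_ge0 (ltW hN1)) (ltW lne_gt0).
rewrite -(ltr_int R); apply: le_lt_trans (floor_le _) _.
apply: lt_le_trans (ceil_ge _).
rewrite ltr_pM2r ?invr_gt0 ?lne_gt0 // ltr_ln // posrE; exact: lt_trans hN1.
Qed.
End Flog.

Lemma ln_ge23 (R : realType) (n : nat) : (3 <= n)%N -> 2/3 <= ln (n%:R : R).
Proof.
move=> hn; have hn0 : (0 : R) < n%:R by rewrite ltr0n; lia.
have h := @le_ln1Dx R (n%:R^-1 - 1).
rewrite addrCA subrr addr0 lnV ?posrE // in h.
have h3 : n%:R^-1 <= (3%:R : R)^-1.
  by rewrite lef_pV2 ?posrE ?ler_nat // ltr0n.
have hi0 : 0 < (n%:R : R)^-1 by rewrite invr_gt0.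
have hp : -1 < (n%:R : R)^-1 - 1 by lra.
have := h hp.
have -> : (3%:R : R)^-1 = 1/3 by rewrite div1r.
move: h3; rewrite -[(3%:R : R)^-1]div1r; lra.
Qed.

Lemma eps5_gt0 (R : realType) (n : nat) (eps : R) : (3 <= n)%N -> 0 < eps -> 0 < eps5 n eps.
Proof.
move=> hn he; rewrite /eps5 /eps1; apply: divr_gt0; first by apply: divr_gt0 => //; lra.
have := @ln_ge23 R n hn; lra.
Qed.

Lemma nat_suf a B : (a < B)%N -> (B < 2 * B - a <= 2 * B)%N.
Proof. lia. Qed.
Lemma nat_pre_suf a b B : (1 <= a <= B)%N -> (B < b <= 2 * B)%N -> (a < b)%N.
Proof. lia. Qed.
Lemma nat_suf_inj a b B : (2 * B - a = 2 * B - b)%N -> (b < B)%N -> (a < B)%N -> a = b.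
Proof. lia. Qed.
Lemma nat_le2 a B : (a <= B)%N -> (a <= 2 * B)%N.
Proof. lia. Qed.
Lemma nat_gt1 a B : (B < a)%N -> (1 <= a)%N.
Proof. lia. Qed.
Lemma nat_predlt i j : (i.-1 < j)%N -> (i <= j)%N.
Proof. lia. Qed.
Lemma nat_pred_contra i : (i <= i.-1)%N -> (1 <= i)%N -> False.
Proof. lia. Qed.
Lemma nat_predle m l : (m.+1 <= l.-1)%N -> (m.+1 < l)%N.
Proof. lia. Qed.
Lemma nat_lpred l : (1 < l)%N -> (1 <= l.-1 < l)%N.
Proof. lia. Qed.
Lemma nat_le2B a B : (a <= 2 * B)%N -> (a < (2 * B + 1).+1)%N.
Proof. lia. Qed.
Lemma nat_ab c b l : (c.+1 < b)%N -> (b <= l.-1)%N -> (1 <= c.+1 < l)%N /\ (1 <= b < l)%N.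
Proof. lia. Qed.
Lemma nat_eqk a k : (a < k.+1)%N -> ~~ (a < k)%N -> a = k.
Proof. lia. Qed.
Lemma nat_kf k B f : k = (2 * B - f)%N -> (f < B)%N -> (2 * B + 1 - k)%N = f.+1.
Proof. lia. Qed.

Unset Implicit Arguments.
Theorem lemma4p11 (R : realType) (V : finType) (adj : rel V) (w : V -> V -> R)
  (W eps : R) (U : nat -> {set V}) (p : nat) (P : seq V) (u v : V) :
  (3 <= #|V|)%N ->
  symmetric adj -> irreflexive adj ->
  (forall x y, adj x y -> w x y = w y x) ->
  (forall x y, adj x y -> 1 <= w x y <= W) ->
  0 < eps ->
  (1 <= p)%N -> U 1%N = [set: V] ->
  (* shortest paths in every (induced) subgraph are unique *)
  (forall (S : {set V}) x y q1 q2,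
     is_spath adj w S q1 x y -> is_spath adj w S q2 x y -> q1 = q2) ->
  (* P is a path from u to v in G *)
  walk_in adj [set: V] P u v -> uniq P ->
  segment_bipath adj w U p (eps5 #|V| eps) P u ->
  bipath adj w U p (eps5 #|V| eps) (Bnum #|V| W eps) P u.
Proof.
move=> hn _ _ _ hw heps _ _ _ [s0 [hP _ hpath _]] huniq hseg.
set n := #|V| in hn hseg *.
set e := eps5 n eps in hseg *.
set BB := Bnum n W eps.
have e0 : 0 < e by exact: eps5_gt0.
have hw1 : forall x y, adj x y -> 1 <= w x y by move=> x y /hw /andP[].
have hwW : forall x y, adj x y -> w x y <= W by move=> x y /hw /andP[].
have hsort : sorted adj P by rewrite hP.
set l := (size P).-1.
set L := wlen w P.
have hln : (l < n)%N.
  have := max_card (mem P); rewrite (card_uniqP huniq) /l -/n hP /=; lia.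
have hsum : forall i, pl w P i + sl w P i = L by move=> i; exact: wlen_split.
have hidx_W : (2 <= l)%N -> 1 <= W.
  move: hsort; rewrite /l hP /=; case: (s0) => [|y s1] //= /andP [hy _] _.
  have /andP[h1 h2] := hw _ _ hy; exact: le_trans h1 h2.
have hL0 : 0 <= L by have := wlen_ge0 hw1 hsort.
have hLN : (2 <= l)%N -> L < n%:R * W.
  move=> hl; have W1 := hidx_W hl.
  apply: le_lt_trans (wlen_le hsort hwW) _; rewrite -/l ltr_pM2r ?ltr_nat //.
  exact: lt_le_trans ltr01 W1.
have hpl1 : forall i, (1 <= i < l)%N -> 1 <= pl w P i.
  move=> i hi; apply: le_trans (wlen_ge hw1 (take_sorted _ hsort)).
  rewrite size_take; case: ifP => _; rewrite ler1n; lia.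
have hsl1 : forall i, (1 <= i < l)%N -> 1 <= sl w P i.
  move=> i hi; apply: le_trans (wlen_ge hw1 (drop_sorted _ hsort)).
  rewrite size_drop ler1n; lia.
have hplL : forall i, (1 <= i < l)%N -> pl w P i <= L.
  move=> i hi; have := hsum i; have := hsl1 i hi; lra.
have hslL : forall i, (1 <= i < l)%N -> sl w P i <= L.
  move=> i hi; have := hsum i; have := hpl1 i hi; lra.
have hBB : BB = `| Num.ceil (ln (n%:R * W) / ln (1 + e)) |%N by [].
have fl_lt : forall x, (2 <= l)%N -> 1 <= x -> x <= L -> (`|flog e x| < BB)%N.
  move=> x hl h1 hxL; rewrite hBB; apply: flog_ltB => //.
  exact: le_lt_trans hxL (hLN hl).
have fl_ub : forall x, 1 <= x -> x < (1 + e) ^+ (`|flog e x|%N.+1).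
  by move=> x hx; exact: flog_ub.
have fl_mono : forall x y, 1 <= x -> x <= y -> (`|flog e x| <= `|flog e y|)%N.
  move=> x y hx hxy; rewrite -lez_nat gez0_abs ?flog_ge0 // gez0_abs ?flog_ge0 //.
    exact: flog_mono.
  exact: le_trans hxy.
have fl_inj : forall x y, 1 <= x -> 1 <= y -> `|flog e x|%N = `|flog e y|%N -> flog e x = flog e y.
  move=> x y hx hy h; rewrite -(gez0_abs (flog_ge0 e0 hx)) -(gez0_abs (flog_ge0 e0 hy)).
  by rewrite h.
pose half i := pl w P i <= L / 2.
pose key i : nat := if half i then (`|flog e (pl w P i)|).+1 else (2 * BB - `|flog e (sl w P i)|)%N.
have idx2 : forall i, (1 <= i < l)%N -> (2 <= l)%N.
  by move=> i /andP [h1 h2]; exact: leq_ltn_trans h1 h2.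
have key_pre : forall i, (1 <= i < l)%N -> half i -> (1 <= key i <= BB)%N.
  move=> i hi hh; rewrite /key hh /=.
  exact: fl_lt _ (idx2 i hi) (hpl1 i hi) (hplL i hi).
have key_suf : forall i, (1 <= i < l)%N -> ~~ half i -> (BB < key i <= 2 * BB)%N.
  move=> i hi hh; rewrite /key (negbTE hh) /=.
  exact: nat_suf (fl_lt _ (idx2 i hi) (hsl1 i hi) (hslL i hi)).
have suf_lt : forall i, ~~ half i -> sl w P i < L / 2.
  move=> i; rewrite /half -ltNge => h; have := hsum i; lra.
have pre_nlt : forall i, half i -> ~ (sl w P i < L / 2).
  move=> i; rewrite /half => h h'; have := hsum i; lra.
have key_mono : forall i j, (1 <= i < l)%N -> (1 <= j < l)%N -> (i <= j)%N -> (key i <= key j)%N.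
  move=> i j hi hj hij.
  have hpij : pl w P i <= pl w P j by have := pl_mono hw1 hsort hij.
  case hhi: (half i); case hhj: (half j).
  - rewrite /key hhi hhj ltnS; apply: fl_mono => //; exact: hpl1.
  - exact: ltnW (nat_pre_suf (key_pre i hi hhi) (key_suf j hj (negbT hhj))).
  - by move: hhi hhj; rewrite /half => /negbT; rewrite -ltNge => h1 h2; move: (h2); lra.
  - rewrite /key hhi hhj; apply: leq_sub2l; apply: fl_mono; first exact: hsl1.
    have := hsum i; have := hsum j; lra.
have key_seg : forall i j, (1 <= i < l)%N -> (1 <= j < l)%N ->
    same_seg w e P i j <-> key i = key j.
  move=> i j hi hj; rewrite /same_seg -/l -/L; split.
    case=> _ _ [[h1 [h2 h3]] | [h1 [h2 h3]]].
      by rewrite /key /half h1 h2 h3.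
    have hhi : ~~ half i by apply/negP => /pre_nlt.
    have hhj : ~~ half j by apply/negP => /pre_nlt.
    by rewrite /key (negbTE hhi) (negbTE hhj) h3.
  move=> hk; split => //.
  case hhi: (half i); case hhj: (half j).
  - left; split => //; split => //; apply: fl_inj; try exact: hpl1.
    by move: hk; rewrite /key hhi hhj => -[].
  - by move: (nat_pre_suf (key_pre i hi hhi) (key_suf j hj (negbT hhj))); rewrite hk ltnn.
  - by move: (nat_pre_suf (key_pre j hj hhj) (key_suf i hi (negbT hhi))); rewrite hk ltnn.
  - right; split; first exact: suf_lt (negbT hhi).
    split; first exact: suf_lt (negbT hhj).
    apply: fl_inj; try exact: hsl1.
    have := fl_lt _ (idx2 i hi) (hsl1 i hi) (hslL i hi).
    have := fl_lt _ (idx2 i hi) (hsl1 j hj) (hslL j hj).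
    move: hk; rewrite /key hhi hhj; exact: nat_suf_inj.
have key_le : forall i, (1 <= i < l)%N -> (1 <= key i <= 2 * BB)%N.
  move=> i hi; case hh: (half i).
    have /andP[h1 h2] := key_pre i hi hh; rewrite h1 /=; exact: nat_le2 h2.
  have /andP[h1 h2] := key_suf i hi (negbT hh); rewrite h2 andbT; exact: nat_gt1 h1.
have key_peq : forall i, half i -> key i = (`|flog e (pl w P i)|).+1.
  by move=> i hh; rewrite /key hh.
have key_seq : forall i, ~~ half i -> key i = (2 * BB - `|flog e (sl w P i)|)%N.
  by move=> i hh; rewrite /key (negbTE hh).
clearbody key.
pose c k := (\max_(j < l | (1 <= j)%N && (key j < k)%N) j)%N.
have hcl : forall k, (c k <= l.-1)%N.
  by move=> k; apply/bigmax_leqP => j _; rewrite -ltnS (ltn_predK (ltn_ord j)).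
have hcb : forall k i, (1 <= i < l)%N -> (key i < k)%N = (i <= c k)%N.
  move=> k i hi; apply/idP/idP.
    move=> hk; have hil : (i < l)%N by case/andP: hi.
    have hi1 : (1 <= i)%N by case/andP: hi.
    exact: (leq_bigmax_cond (Ordinal hil) (introT andP (conj hi1 hk))).
  move=> hic; rewrite ltnNge; apply/negP => hk.
  have : (c k <= i.-1)%N.
    apply/bigmax_leqP => j /andP [j1 jk].
    rewrite leqNgt; apply/negP => hij.
    have hj : (1 <= j < l)%N by rewrite j1 ltn_ord.
    have := key_mono i j hi hj (nat_predlt hij).
    move=> h; move: jk; rewrite ltnNge; move/negP; apply; exact: leq_trans hk h.
  move=> h; case/andP: hi => h1 _; exact: nat_pred_contra (leq_trans hic h) h1.
have hc0 : c 0%N = 0%N.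
  by apply/eqP; rewrite -leqn0; apply/bigmax_leqP => j /andP [].
have hcmono : forall k, (c k <= c k.+1)%N.
  move=> k; case hck: (c k) => [|m] //.
  have hidx : (1 <= c k < l)%N.
    rewrite hck /=; have := hcl k; rewrite hck; exact: nat_predle.
  rewrite -hck -(hcb _ _ hidx); apply: (leq_trans _ (leqnSn k)); rewrite (hcb _ _ hidx); exact: leqnn.
rewrite /bipath -/l.
exists (fun k => minn (c k).+1 (c k.+1)), (fun k => c k.+1); split.
- by rewrite hc0; exact: geq_minl.
- case: (leqP l 1) => hl; first exact: leq_trans hl _.
  have hidx : (1 <= l.-1 < l)%N by exact: nat_lpred hl.
  have := key_le _ hidx; case/andP => _ hk.
  have : (l.-1 <= c (2 * BB + 1).+1)%N.
    rewrite -(hcb _ _ hidx); exact: nat_le2B hk.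
  by rewrite -ltnS (ltn_predK hl).
- move=> k _; rewrite geq_minr /=; exact: leq_trans (hcl _) (leq_pred _).
- by move=> k _; rewrite leq_min leqnSn hcmono geq_minl.
move=> k _ hlt.
have hab : ((c k).+1 < c k.+1)%N.
  by move: hlt; rewrite gtn_min ltnn orbF.
have -> : minn (c k).+1 (c k.+1) = (c k).+1 by apply/minn_idPl; exact: ltnW.
have [ha hb] := nat_ab hab (hcl k.+1).
have hka : key (c k).+1 = k.
  apply: nat_eqk; first by rewrite (hcb _ _ ha); exact: ltnW.
  by rewrite (hcb _ _ ha) ltnn.
have hkb : key (c k.+1) = k.
  apply: nat_eqk; first by rewrite (hcb _ _ hb).
  by rewrite (hcb _ _ hb) -ltnNge; exact: ltn_trans (ltnSn _) hab.
split.
- apply: hseg; first by apply/(key_seg _ _ ha hb); rewrite hka hkb.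
  move=> c' hs; have hs' := hs; case: hs' => _ hc' _.
  have /(key_seg _ _ ha hc') hk := hs; rewrite hka in hk.
  apply/andP; split.
    by rewrite ltnNge -(hcb _ _ hc') -hk ltnn.
  by rewrite -(hcb _ _ hc') -hk ltnSn.
- move=> hkB.
  have hh : half (c k.+1).
    apply/negPn/negP => hh; have /andP [h1 _] := key_suf _ hb hh.
    by move: h1; rewrite hkb ltnNge -ltnS hkB.
  have := fl_ub _ (hpl1 _ hb); rewrite -key_peq // hkb; exact: ltW.
- move=> hkB.
  have hh : ~~ half (c k).+1.
    apply/negP => hh; have /andP [_ h2] := key_pre _ ha hh.
    by move: h2; rewrite hka leqNgt hkB.
  have := fl_ub _ (hsl1 _ ha); move: (key_seq _ hh); rewrite hka => hk.
  have hf := fl_lt _ (idx2 _ ha) (hsl1 _ ha) (hslL _ ha).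
  rewrite (nat_kf hk hf); exact: ltW.
Qed.
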